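(* Let $\varphi_0\in\mathbb{R}$ and let $v$ be a smooth function with $v(\varphi)>0$ and $v'(\varphi)>0$ for all $\varphi\ge\varphi_0$. Set $\mathfrak{v}(\varphi)=(\log\sqrt{v(\varphi)})'$ and $\mathfrak{R}_0=\{(\varphi,\mathfrak{h}):\varphi_0\le\varphi<\infty,\ 1\le\mathfrak{h}<\infty\}$. Let $\mathfrak{h}$ be the solution of $$\mathfrak{h}'=\sqrt{\mathfrak{h}^2-1}-\mathfrak{v}(\varphi)\,\mathfrak{h},\qquad \mathfrak{h}(\varphi_0)=\mathfrak{h}_0>1.$$ Then either (type A) $\mathfrak{h}$ leaves $\mathfrak{R}_0$ by reaching the boundary $\mathfrak{h}=1$ at some finite $\varphi_1>\varphi_0$, with slope $\mathfrak{h}'(\varphi_1)=-\mathfrak{v}(\varphi_1)<0$ there, or (type B) it exists and remains in $\mathfrak{R}_0$ for all $\varphi>\varphi_0$.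
   Context: The function $\mathfrak{h}=h/\sqrt{v}$ is the ''modified Hubble parameter'': $h$ solves $h'=\sqrt{h^2-v}$ on $\{h>\sqrt v\}$ if and only if $\mathfrak{h}=h/\sqrt v$ solves the displayed equation on $\{\mathfrak{h}>1\}$. *)

(* Defs.v *)
From Stdlib Require Import Reals.
From Coquelicot Require Import Coquelicot.
Open Scope R_scope.

Definition smooth (f : R -> R) : Prop :=
  forall (n : nat) (x : R), ex_derive_n f n x.

Definition frakv (v : R -> R) (phi : R) : R :=
  Derive (fun x => ln (sqrt (v x))) phi.

(* h is a solution of  h' = sqrt(h^2-1) - frakv v * h,  h(phi0) = h0,
   on the interval [phi0, T) (T possibly +oo), staying in the open region h > 1.
   At phi0 only right-continuity is required (derivative on the open part). *)
Definition is_sol (v : R -> R) (phi0 h0 : R) (h : R -> R) (T : Rbar) : Prop :=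
  Rbar_lt (Finite phi0) T /\
  h phi0 = h0 /\
  filterlim h (at_right phi0) (locally h0) /\
  (forall x, phi0 <= x -> Rbar_lt (Finite x) T -> 1 < h x) /\
  (forall x, phi0 < x -> Rbar_lt (Finite x) T ->
     is_derive h x (sqrt (h x ^ 2 - 1) - frakv v x * h x)).

Definition is_maximal_sol (v : R -> R) (phi0 h0 : R) (h : R -> R) (T : Rbar) : Prop :=
  is_sol v phi0 h0 h T /\
  forall (T' : Rbar) (g : R -> R),
    Rbar_lt T T' ->
    (forall x, phi0 <= x -> Rbar_lt (Finite x) T -> g x = h x) ->
    ~ is_sol v phi0 h0 g T'.

(* Main.v *)
Require Import Defs.
From Stdlib Require Import Reals Lra Lia Classical.
From Coquelicot Require Import Coquelicot.
Open Scope R_scope.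

Lemma ballR x (e:R) y : ball x e y <-> Rabs (y - x) < e.
Proof. reflexivity. Qed.
Lemma ballR1 x (e:R) y : ball x e y -> Rabs (y - x) < e.
Proof. auto. Qed.
Lemma ballR2 x (e:R) y : Rabs (y - x) < e -> ball x e y.
Proof. auto. Qed.

Lemma exR (f : R -> R) a b : (forall z, Rmin a b <= z <= Rmax a b -> continuous f z) -> ex_RInt f a b.
Proof. intros H. apply (ex_RInt_continuous (V:=R_CompleteNormedModule)). exact H. Qed.

Lemma RInt_minusR (f g : R -> R) a b : ex_RInt f a b -> ex_RInt g a b ->
  RInt (fun t => f t - g t) a b = RInt f a b - RInt g a b.
Proof. intros. apply (RInt_minus (V:=R_CompleteNormedModule)); auto. Qed.

Lemma RInt_bound (f : R -> R) a b B :
  (forall t, Rmin a b <= t <= Rmax a b -> continuous f t) ->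
  (forall t, Rmin a b <= t <= Rmax a b -> Rabs (f t) <= B) ->
  Rabs (RInt f a b) <= B * Rabs (b - a).
Proof.
  intros Hc HB. assert (Hex : ex_RInt f a b) by (apply exR; auto).
  destruct (Rle_dec a b) as [Hab|Hab].
  - rewrite Rmin_left in HB by lra. rewrite Rmax_right in HB by lra.
    rewrite (Rabs_right (b - a)) by lra. rewrite Rmult_comm.
    apply abs_RInt_le_const; auto.
  - rewrite Rmin_right in HB by lra. rewrite Rmax_left in HB by lra.
    rewrite <- opp_RInt_swap.
    2:{ apply ex_RInt_swap; auto. }
    change (Rabs (- RInt f b a) <= B * Rabs (b - a)).
    rewrite Rabs_Ropp. rewrite (Rabs_left (b - a)) by lra.
    replace (- (b - a)) with (a - b) by ring. rewrite Rmult_comm.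
    apply abs_RInt_le_const; auto; try lra. apply ex_RInt_swap; auto.
Qed.

Lemma lip_cont f M x : 0 <= M -> (forall y z, Rabs (f y - f z) <= M * Rabs (y - z)) -> continuous f x.
Proof.
  intros HM H. apply filterlim_locally. intros eps.
  assert (Hp : 0 < eps / (M + 1)). { apply Rdiv_lt_0_compat. apply cond_pos. lra. }
  exists (mkposreal _ Hp). intros y Hy. apply ballR1 in Hy; apply ballR2. simpl in Hy.
  eapply Rle_lt_trans. apply H.
  apply Rle_lt_trans with ((M+1) * Rabs (y - x)).
  { apply Rmult_le_compat_r. apply Rabs_pos. lra. }
  apply Rlt_le_trans with ((M+1) * (eps / (M+1))).
  { apply Rmult_lt_compat_l; lra. }
  right. field. lra.
Qed.

Lemma zero_of_geom a C : 0 <= a -> (forall n, a <= C * (/2) ^ n) -> a = 0.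
Proof.
  intros H0 H. apply Rle_antisym; auto.
  assert (Hg : is_lim_seq (fun n => (/2)^n) 0).
  { apply is_lim_seq_geom. rewrite Rabs_right; lra. }
  pose proof (is_lim_seq_scal_l _ C 0 Hg) as Hl. simpl in Hl. rewrite Rmult_0_r in Hl.
  pose proof (is_lim_seq_le (fun _ => a) _ a 0 H (is_lim_seq_const a) Hl). simpl in H1. auto.
Qed.

Section Picard.
Variable F : R -> R -> R.
Variables c y0 M K d : R.
Hypothesis HFc : forall phi : R -> R, (forall t, continuous phi t) -> forall t, continuous (fun t => F t (phi t)) t.
Hypothesis HM : forall x y, Rabs (F x y) <= M.
Hypothesis HK : forall x y1 y2, Rabs (F x y1 - F x y2) <= K * Rabs (y1 - y2).
Hypothesis HK0 : 0 <= K.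
Hypothesis Hd : 0 < d.
Hypothesis HKd : K * d <= / 2.

Lemma M_pos : 0 <= M.
Proof. eapply Rle_trans. apply Rabs_pos. apply (HM 0 0). Qed.

Fixpoint pic (n : nat) : R -> R :=
  match n with
  | O => fun _ => y0
  | S n => fun x => y0 + RInt (fun t => F t (pic n t)) c x
  end.

Lemma pic_lip n : (forall t, continuous (pic n) t) /\ forall x y, Rabs (pic n x - pic n y) <= M * Rabs (x - y).
Proof.
  pose proof M_pos.
  induction n as [|n [IHc IHl]].
  - split. intros; apply continuous_const. intros; simpl. rewrite Rminus_diag, Rabs_R0.
    apply Rmult_le_pos; auto. apply Rabs_pos.
  - assert (Hl : forall x y, Rabs (pic (S n) x - pic (S n) y) <= M * Rabs (x - y)).
    { intros x y. simpl.
      assert (Hex : forall a b, ex_RInt (fun t => F t (pic n t)) a b).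
      { intros; apply exR. intros; apply HFc; auto. }
      rewrite <- (RInt_Chasles (fun t => F t (pic n t)) c y x) by auto.
      change (plus ?a ?b) with (a + b).
      assert (E: forall a b c0 : R, a + (b + c0) - (a + b) = c0) by (intros; ring). rewrite E.
      apply RInt_bound; intros; auto. }
    split; auto. intros t. apply lip_cont with M; auto.
Qed.

Lemma pic_ex n a b : ex_RInt (fun t => F t (pic n t)) a b.
Proof. apply exR. intros; apply HFc. apply pic_lip. Qed.

Lemma pic_contr n x : Rabs (x - c) <= d -> Rabs (pic (S n) x - pic n x) <= M * d * (/2) ^ n.
Proof.
  pose proof M_pos.
  revert x. induction n as [|n IH]; intros x Hx.
  - simpl. assert (E: forall a b : R, a + b - a = b) by (intros; ring). rewrite E.
    eapply Rle_trans. apply RInt_bound with (B := M). intros; apply HFc; intros; apply continuous_const.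
    intros; auto. rewrite Rmult_1_r. apply Rmult_le_compat_l; auto.
  - change (pic (S (S n)) x) with (y0 + RInt (fun t => F t (pic (S n) t)) c x).
    change (pic (S n) x) with (y0 + RInt (fun t => F t (pic n t)) c x).
    assert (E: forall a b c0 : R, a + b - (a + c0) = b - c0) by (intros; ring).
    rewrite E.
    rewrite <- RInt_minusR by apply pic_ex.
    eapply Rle_trans. apply RInt_bound with (B := K * (M * d * (/2)^n)).
    + intros. apply (continuous_minus (fun t => F t (pic (S n) t)) (fun t => F t (pic n t)));
      apply HFc; apply pic_lip.
    + intros t Ht.
      eapply Rle_trans. apply HK. apply Rmult_le_compat_l; auto. apply IH.
      assert (Rabs (t - c) <= Rabs (x - c)).
      { unfold Rmin, Rmax in Ht. destruct (Rle_dec c x); unfold Rabs; destruct Rcase_abs; destruct Rcase_abs; lra. }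
      lra.
    + simpl. 
      apply Rle_trans with (K * d * (M * d * (/ 2) ^ n)).
      * replace (K * d * (M * d * (/ 2) ^ n)) with (K * (M * d * (/ 2) ^ n) * d) by ring.
        apply Rmult_le_compat_l; auto. apply Rmult_le_pos; auto. apply Rmult_le_pos. apply Rmult_le_pos; lra.
        apply pow_le; lra.
      * replace (M * d * (/ 2 * (/ 2) ^ n)) with (/2 * (M * d * (/ 2) ^ n)) by ring.
        apply Rmult_le_compat_r; auto. apply Rmult_le_pos. apply Rmult_le_pos; lra. apply pow_le; lra.
Qed.


Lemma pic_tail n m x : Rabs (x - c) <= d ->
  Rabs (pic (n + m) x - pic n x) <= 2 * M * d * ((/2)^n - (/2)^(n+m)).
Proof.
  intros Hx. induction m as [|m IH].
  - rewrite Nat.add_0_r, Rminus_diag, Rabs_R0, Rminus_diag. lra.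
  - rewrite Nat.add_succ_r.
    pose proof (pic_contr (n+m) x Hx).
    replace (pic (S (n + m)) x - pic n x) with ((pic (S (n + m)) x - pic (n+m) x) + (pic (n+m) x - pic n x)) by ring.
    eapply Rle_trans. apply Rabs_triang. simpl (( / 2) ^ S (n + m)). lra.
Qed.

Lemma pic_tail' n m x : Rabs (x - c) <= d -> (n <= m)%nat ->
  Rabs (pic m x - pic n x) <= 2 * M * d * (/2)^n.
Proof.
  intros Hx Hnm. replace m with (n + (m - n))%nat by lia.
  eapply Rle_trans. apply pic_tail; auto.
  pose proof M_pos. assert (0 <= (/2)^(n + (m-n))) by (apply pow_le; lra).
  assert (0 <= 2 * M * d) by (apply Rmult_le_pos; lra).
  apply Rmult_le_compat_l; lra.
Qed.

Lemma pic_cv x : Rabs (x - c) <= d -> ex_finite_lim_seq (fun n => pic n x).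
Proof.
  intros Hx. apply ex_lim_seq_cauchy_corr. intros eps.
  pose proof M_pos.
  assert (HA : 0 <= 2 * M * d) by (apply Rmult_le_pos; lra).
  set (A := 2 * M * d) in *.
  destruct (pow_lt_1_zero (/2)) with (y := eps / (2 * A + 1)) as [N HN].
  { rewrite Rabs_right; lra. }
  { apply Rdiv_lt_0_compat. apply cond_pos. lra. }
  exists N. intros n m Hn Hm.
  assert (HB : forall p, (N <= p)%nat -> Rabs (pic p x - pic N x) <= A * (/2)^N) by (intros; apply pic_tail'; auto).
  replace (pic n x - pic m x) with ((pic n x - pic N x) - (pic m x - pic N x)) by ring.
  eapply Rle_lt_trans. apply Rabs_triang. rewrite Rabs_Ropp.
  pose proof (HB n Hn) as Hbn. pose proof (HB m Hm) as Hbm.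
  pose proof (HN N (le_n N)) as H3. rewrite Rabs_right in H3 by (apply Rle_ge, pow_le; lra).
  assert (A * (/ 2) ^ N <= A * (eps / (2 * A + 1))) by (apply Rmult_le_compat_l; lra).
  destruct eps as [e He]; simpl in *.
  assert (E : A * (e / (2 * A + 1)) = e/2 - e / (2 * (2 * A + 1))) by (field; lra).
  assert (0 < e / (2 * (2 * A + 1))) by (apply Rdiv_lt_0_compat; lra).
  lra.
Qed.

Definition gl x := real (Lim_seq (fun n => pic n x)).

Lemma gl_lim x : Rabs (x - c) <= d -> is_lim_seq (fun n => pic n x) (gl x).
Proof.
  intros Hx. pose proof (pic_cv x Hx) as [l Hl]. unfold gl. rewrite (is_lim_seq_unique _ _ Hl). simpl. auto.
Qed.

Lemma lim_le_const (u : nat -> R) (l : R) B : is_lim_seq u l -> (forall n, Rabs (u n) <= B) -> Rabs l <= B.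
Proof.
  intros Hl HB. assert (H := is_lim_seq_abs _ _ Hl).
  pose proof (is_lim_seq_le (fun n => Rabs (u n)) (fun _ => B) _ _ HB H (is_lim_seq_const B)) as H0. simpl in H0. exact H0.
Qed.

Lemma gl_err n x : Rabs (x - c) <= d -> Rabs (gl x - pic n x) <= 2 * M * d * (/2)^n.
Proof.
  intros Hx.
  assert (H := is_lim_seq_minus' _ (fun _ => pic n x) _ _ (gl_lim x Hx) (is_lim_seq_const (pic n x))).
  assert (H' : is_lim_seq (fun m => pic (m + n) x - pic n x) (gl x - pic n x)).
  { apply -> (is_lim_seq_incr_n (fun m => pic m x - pic n x) n). auto. }
  apply lim_le_const with (1 := H'). intros m. apply pic_tail'; auto. lia.
Qed.

Definition clampc x := Rmax (c - d) (Rmin (c + d) x).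
Definition g x := gl (clampc x).

Lemma clampc_in x : Rabs (clampc x - c) <= d.
Proof. unfold clampc, Rmax, Rmin. repeat destruct Rle_dec; unfold Rabs; destruct Rcase_abs; lra. Qed.
Lemma clampc_id x : Rabs (x - c) <= d -> clampc x = x.
Proof. unfold clampc, Rmax, Rmin. intros H. repeat destruct Rle_dec; unfold Rabs in H; destruct Rcase_abs; lra. Qed.
Lemma clampc_lip x y : Rabs (clampc x - clampc y) <= Rabs (x - y).
Proof. unfold clampc, Rmax, Rmin. repeat destruct Rle_dec; unfold Rabs; repeat destruct Rcase_abs; lra. Qed.

Lemma g_lip x y : Rabs (g x - g y) <= M * Rabs (x - y).
Proof.
  unfold g. set (a := clampc x). set (b := clampc y).
  assert (Ha := clampc_in x). assert (Hb := clampc_in y).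
  assert (H := is_lim_seq_minus' _ _ _ _ (gl_lim a Ha) (gl_lim b Hb)).
  eapply Rle_trans. apply lim_le_const with (1 := H). intros n. apply (proj2 (pic_lip n)).
  apply Rmult_le_compat_l. apply M_pos. apply clampc_lip.
Qed.

Lemma g_cont t : continuous g t.
Proof. apply lip_cont with M. apply M_pos. apply g_lip. Qed.

Lemma g_ex a b : ex_RInt (fun t => F t (g t)) a b.
Proof. apply exR. intros; apply HFc. apply g_cont. Qed.

Lemma g_int x : Rabs (x - c) <= d -> g x = y0 + RInt (fun t => F t (g t)) c x.
Proof.
  intros Hx. pose proof M_pos.
  apply Rminus_diag_uniq. apply Rabs_eq_0. apply (zero_of_geom _ (2 * M * d)). apply Rabs_pos.
  intros n.
  assert (E : forall (a b i1 i2 : R), a - (b + i2) = (a - (b + i1)) + (i1 - i2)) by (intros; ring).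
  rewrite (E _ _ (RInt (fun t => F t (pic n t)) c x)).
  change (y0 + RInt (fun t => F t (pic n t)) c x) with (pic (S n) x).
  eapply Rle_trans. apply Rabs_triang.
  assert (H1 : Rabs (g x - pic (S n) x) <= M * d * (/2)^n).
  { unfold g. rewrite clampc_id by auto. eapply Rle_trans. apply gl_err; auto. simpl. right; field. }
  rewrite <- (RInt_minusR (fun t => F t (pic n t)) (fun t => F t (g t)) c x (pic_ex n c x) (g_ex c x)).
  assert (H2 : Rabs (RInt (fun t => F t (pic n t) - F t (g t)) c x) <= M * d * (/2)^n).
  { eapply Rle_trans. apply RInt_bound with (B := K * (2 * M * d * (/2)^n)).
    + intros. apply (continuous_minus (fun t => F t (pic n t)) (fun t => F t (g t))).
      apply HFc; apply pic_lip. apply HFc. apply g_cont.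
    + intros t Ht. eapply Rle_trans. apply HK. apply Rmult_le_compat_l; auto.
      assert (Rabs (t - c) <= Rabs (x - c)).
      { unfold Rmin, Rmax in Ht. destruct (Rle_dec c x); unfold Rabs; destruct Rcase_abs; destruct Rcase_abs; lra. }
      unfold g. rewrite clampc_id by lra. rewrite <- Rabs_Ropp. replace (- (pic n t - gl t)) with (gl t - pic n t) by ring.
      apply gl_err. lra.
    + assert (0 <= (/2)^n) by (apply pow_le; lra).
      assert (0 <= M * d * (/2)^n) by (apply Rmult_le_pos; [apply Rmult_le_pos|]; lra).
      apply Rle_trans with (K * d * (2 * (M * d * (/2)^n))).
      * replace (K * d * (2 * (M * d * (/2)^n))) with (K * (2 * M * d * (/ 2) ^ n) * d) by ring.
        apply Rmult_le_compat_l. apply Rmult_le_pos; lra. auto.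
      * apply Rle_trans with (/2 * (2 * (M * d * (/ 2) ^ n))).
        apply Rmult_le_compat_r; lra. right; field. }
  lra.
Qed.

Lemma g_c : g c = y0.
Proof.
  rewrite g_int. rewrite RInt_point. change (y0 + 0 = y0). ring. rewrite Rminus_diag, Rabs_R0; lra.
Qed.

Lemma g_der x : Rabs (x - c) < d -> is_derive g x (F x (g x)).
Proof.
  intros Hx.
  assert (H1 : is_derive (RInt (fun t => F t (g t)) c) x (F x (g x))).
  { apply (is_derive_RInt (V:=R_CompleteNormedModule) (fun t => F t (g t)) (RInt (fun t => F t (g t)) c) c x).
    - apply filter_forall. intros b. apply RInt_correct. apply g_ex.
    - apply (HFc g g_cont x). }
  pose proof (is_derive_plus _ _ x _ _ (is_derive_const y0 x) H1) as H2.
  rewrite plus_zero_l in H2.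
  eapply is_derive_ext_loc. 2: exact H2.
  assert (Hp : 0 < d - Rabs (x - c)) by lra.
  exists (mkposreal _ Hp). intros y Hy. apply ballR1 in Hy. simpl in Hy.
  change (y0 + RInt (fun t => F t (g t)) c y = g y). symmetry. apply g_int.
  replace (y - c) with ((y - x) + (x - c)) by ring. eapply Rle_trans. apply Rabs_triang. lra.
Qed.

Lemma g_bound x : Rabs (x - c) <= d -> Rabs (g x - y0) <= M * Rabs (x - c).
Proof. intros. rewrite <- g_c at 1. apply g_lip. Qed.

End Picard.

Lemma picard (F : R -> R -> R) (c y0 M K d : R) :
  (forall phi : R -> R, (forall t, continuous phi t) -> forall t, continuous (fun t => F t (phi t)) t) ->
  (forall x y, Rabs (F x y) <= M) ->
  (forall x y1 y2, Rabs (F x y1 - F x y2) <= K * Rabs (y1 - y2)) ->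
  0 <= K -> 0 < d -> K * d <= / 2 ->
  exists g : R -> R, g c = y0 /\
    (forall x, Rabs (x - c) < d -> is_derive g x (F x (g x))) /\
    (forall x, Rabs (x - c) <= d -> Rabs (g x - y0) <= M * Rabs (x - c)).
Proof.
  intros. exists (g F c y0 d). split; [|split].
  - apply g_c with (M := M) (K := K); auto.
  - intros; apply g_der with (M := M) (K := K); auto.
  - intros; apply g_bound with (K := K); auto.
Qed.


Lemma frakv_eq v x : ex_derive v x -> 0 < v x -> frakv v x = Derive v x / (2 * v x).
Proof.
  intros Hd Hp. unfold frakv. apply is_derive_unique. auto_derive.
  - repeat split; auto. apply sqrt_lt_R0; auto.
  - assert (Hs : 0 < sqrt (v x)) by (apply sqrt_lt_R0; auto).
    change (Derive (fun x0 : R => v x0) x) with (Derive v x).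
    set (D := Derive v x). set (s := sqrt (v x)).
    assert (Hv : v x = s * s) by (unfold s; rewrite sqrt_sqrt; [reflexivity|lra]).
    change (1 * D * / (2 * s) * / s = D / (2 * v x)). rewrite Hv.
    field. unfold s. apply Rgt_not_eq, sqrt_lt_R0; auto.
Qed.

Section FL.
Context {T : Type} {F : (T -> Prop) -> Prop} {FF : Filter F}.

Lemma fl_plus (a b : T -> R) la lb : filterlim a F (locally la) -> filterlim b F (locally lb) ->
  filterlim (fun x => a x + b x) F (locally (la + lb)).
Proof. intros Ha Hb. apply (filterlim_comp_2 a b Rplus Ha Hb (filterlim_plus (K:=R_AbsRing) (V:=R_NormedModule) la lb)). Qed.

Lemma fl_mult (a b : T -> R) la lb : filterlim a F (locally la) -> filterlim b F (locally lb) ->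
  filterlim (fun x => a x * b x) F (locally (la * lb)).
Proof. intros Ha Hb. apply (filterlim_comp_2 a b Rmult Ha Hb (filterlim_mult (K:=R_AbsRing) la lb)). Qed.

Lemma fl_opp (a : T -> R) la : filterlim a F (locally la) -> filterlim (fun x => - a x) F (locally (- la)).
Proof. intros Ha. apply (filterlim_comp _ _ _ a Ropp F (locally (T:=R_UniformSpace) la) _ Ha (filterlim_opp (K:=R_AbsRing) (V:=R_NormedModule) la)). Qed.

Lemma fl_sub_mul (a b c0 : T -> R) la lb lc : filterlim a F (locally la) -> filterlim b F (locally lb) ->
  filterlim c0 F (locally lc) -> filterlim (fun x => a x - b x * c0 x) F (locally (la - lb * lc)).
Proof. intros. apply fl_plus; auto. apply fl_opp. apply fl_mult; auto. Qed.

Lemma fl_comp (a : T -> R) (f : R -> R) la : filterlim a F (locally la) -> continuous f la ->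
  filterlim (fun x => f (a x)) F (locally (f la)).
Proof. intros. eapply filterlim_comp; eauto. Qed.
End FL.

Lemma cont_left (f : R -> R) a : continuous f a -> filterlim f (at_left a) (locally (f a)).
Proof.
  intros H. eapply filterlim_filter_le_1; [|exact H].
  intros P [e He]. exists e. intros y Hy _. apply He. auto.
Qed.

Lemma lim_le_ev (u : R -> R) a (m : R) B : filterlim u (at_left a) (locally m) ->
  at_left a (fun y => u y <= B) -> m <= B.
Proof.
  intros Hl HB. destruct (Rle_dec m B) as [|Hn]; auto. exfalso.
  assert (Hp : 0 < m - B) by lra.
  apply filterlim_locally with (eps := mkposreal _ Hp) in Hl.
  destruct (filter_ex (F := at_left a) _ (filter_and _ _ Hl HB)) as [y [Hy1 Hy2]].
  apply ballR1 in Hy1. simpl in Hy1. unfold Rabs in Hy1. destruct Rcase_abs; lra.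
Qed.

Lemma lim_abs_le (u : R -> R) a (m : R) B : filterlim u (at_left a) (locally m) ->
  at_left a (fun y => Rabs (u y) <= B) -> Rabs m <= B.
Proof.
  intros Hl HB. unfold Rabs at 1. destruct Rcase_abs.
  - apply fl_opp in Hl. apply (lim_le_ev (fun x => - u x) a); auto.
    eapply filter_imp; [|exact HB]. intros y Hy. simpl. unfold Rabs in Hy; destruct Rcase_abs; lra.
  - apply (lim_le_ev u a); auto.
    eapply filter_imp; [|exact HB]. intros y Hy. simpl. unfold Rabs in Hy; destruct Rcase_abs; lra.
Qed.

Lemma der_cpt f t l : is_derive f t l -> continuity_pt f t.
Proof. intros H. apply continuity_pt_filterlim. apply (ex_derive_continuous (K:=R_AbsRing) (V:=R_NormedModule)). exists l; auto. Qed.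

Lemma der_lin (l t : R) : is_derive (fun t => l * t) t l.
Proof. pose proof (is_derive_scal (fun t => t) t l 1 (is_derive_id t)) as H.
  change (is_derive (fun t => l * t) t (l * 1)) in H. rewrite Rmult_1_r in H. exact H. Qed.

Lemma slope_left (f df : R -> R) (a L l eta0 : R) : 0 < eta0 ->
  (forall x, a - eta0 < x < a -> is_derive f x (df x)) ->
  filterlim f (at_left a) (locally L) -> filterlim df (at_left a) (locally l) ->
  forall eps, 0 < eps -> exists eta, 0 < eta /\
    forall x, a - eta < x < a -> Rabs (f x - L - l * (x - a)) <= eps * (a - x).
Proof.
  intros Heta0 Hder Hf Hdf eps Heps.
  apply filterlim_locally with (eps := mkposreal _ Heps) in Hdf.
  destruct Hdf as [dl Hdl].
  exists (Rmin eta0 dl). split. { apply Rmin_pos; auto. apply cond_pos. }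
  intros x Hx.
  assert (Hx1 : a - eta0 < x) by (pose proof (Rmin_l eta0 dl); lra).
  assert (Hx2 : a - dl < x) by (pose proof (Rmin_r eta0 dl); lra).
  set (u := fun y => f y + (- f x - l * (y - x))).
  assert (Hu : filterlim u (at_left a) (locally (L + (- f x - l * (a - x))))).
  { apply fl_plus; auto.
    apply (cont_left (fun y => - f x - l * (y - x))).
    apply (ex_derive_continuous (K:=R_AbsRing) (V:=R_NormedModule)). auto_derive. auto. }
  assert (Hb : at_left a (fun y => Rabs (u y) <= eps * (a - x))).
  { assert (Hp : 0 < a - x) by lra.
    exists (mkposreal _ Hp). intros y Hy Hya. apply ballR1 in Hy. simpl in Hy.
    assert (Hxy : x < y) by (unfold Rabs in Hy; destruct Rcase_abs; lra).
    destruct (MVT_gen (fun t => f t - l * t) x y (fun t => df t - l)) as [xi [Hxi Heq]].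
    - intros t Ht. rewrite Rmin_left in Ht by lra. rewrite Rmax_right in Ht by lra.
      apply (is_derive_minus f (fun t => l * t) t (df t) l).
      + apply Hder. lra.
      + apply der_lin.
    - intros t Ht. rewrite Rmin_left in Ht by lra. rewrite Rmax_right in Ht by lra.
      apply der_cpt with (df t - l).
      apply (is_derive_minus f (fun t => l * t) t (df t) l).
      + apply Hder. lra.
      + apply der_lin.
    - rewrite Rmin_left in Hxi by lra. rewrite Rmax_right in Hxi by lra.
      unfold u. replace (f y + (- f x - l * (y - x))) with (f y - l * y - (f x - l * x)) by ring.
      rewrite Heq. rewrite Rabs_mult. rewrite (Rabs_right (y - x)) by lra.
      assert (Hd : Rabs (df xi - l) < eps).
      { apply ballR1. apply Hdl. apply ballR2. unfold Rabs; destruct Rcase_abs; lra. lra. }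
      apply Rle_trans with (eps * (y - x)). apply Rmult_le_compat_r; lra.
      apply Rmult_le_compat_l; lra. }
  pose proof (lim_abs_le _ _ _ _ Hu Hb) as H.
  replace (f x - L - l * (x - a)) with (- (L + (- f x - l * (a - x)))) by ring.
  rewrite Rabs_Ropp. auto.
Qed.

Lemma glue (f1 f2 G : R -> R) (a L l : R) :
  G a = L -> (forall x, x < a -> G x = f1 x) -> (forall x, a < x -> G x = f2 x) ->
  (forall eps, 0 < eps -> exists eta, 0 < eta /\
    forall x, a - eta < x < a -> Rabs (f1 x - L - l * (x - a)) <= eps * (a - x)) ->
  is_derive f2 a l -> f2 a = L -> is_derive G a l.
Proof.
  intros HGa H1 H2 Hs Hd2 Hf2.
  apply is_derive_Reals. apply is_derive_Reals in Hd2.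
  intros eps Heps.
  destruct (Hd2 eps Heps) as [d2 Hd].
  destruct (Hs (eps/2)) as [eta [Heta Hb]]. lra.
  assert (Hp : 0 < Rmin d2 eta) by (apply Rmin_pos; auto; apply cond_pos).
  exists (mkposreal _ Hp). intros h Hh0 Hh. simpl in Hh.
  assert (Hh1 : Rabs h < d2) by (pose proof (Rmin_l d2 eta); lra).
  assert (Hh2 : Rabs h < eta) by (pose proof (Rmin_r d2 eta); lra).
  destruct (Rlt_or_le h 0) as [Hn|Hp'].
  - rewrite H1 by lra. rewrite HGa.
    specialize (Hb (a + h)). 
    assert (Hr : Rabs (f1 (a + h) - L - l * (a + h - a)) <= eps / 2 * (a - (a + h))).
    { apply Hb. unfold Rabs in Hh2; destruct Rcase_abs; lra. }
    replace ((f1 (a + h) - L) / h - l) with ((f1 (a + h) - L - l * (a + h - a)) / h) by (field; lra).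
    rewrite Rabs_div by lra. rewrite (Rabs_left h) by lra.
    apply Rle_lt_trans with (eps / 2). 
    + apply Rmult_le_reg_r with (-h). lra. unfold Rdiv. rewrite Rmult_assoc, Rinv_l by lra.
      replace (a - (a + h)) with (-h) in Hr by ring. lra.
    + lra.
  - assert (h <> 0) by auto. rewrite H2 by lra. rewrite HGa, <- Hf2. apply Hd; auto.
Qed.

Lemma dec_lim (w : R -> R) a b : a < b ->
  (forall x y, a < x -> x <= y -> y < b -> w y <= w x) ->
  (forall x, a < x < b -> 0 <= w x) -> exists l, filterlim w (at_left b) (locally l).
Proof.
  intros Hab Hdec Hpos.
  set (E := fun y => exists x, a < x < b /\ y = - w x).
  assert (Hbd : bound E). { exists 0. intros y [x [Hx ->]]. pose proof (Hpos x Hx). lra. }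
  assert (Hne : exists y, E y). { exists (- w ((a+b)/2)). exists ((a+b)/2). split; auto. lra. }
  destruct (completeness E Hbd Hne) as [m [Hub Hlub]].
  exists (- m). apply filterlim_locally. intros eps.
  assert (Hx1 : exists x1, a < x1 < b /\ - w x1 > m - eps).
  { apply NNPP. intros Hn. assert (m <= m - eps).
    { apply Hlub. intros y [x [Hx ->]]. apply Rnot_lt_le. intros Hc. apply Hn. exists x. split; auto. }
    pose proof (cond_pos eps). lra. }
  destruct Hx1 as [x1 [Hx1 Hw1]].
  assert (Hp : 0 < b - x1) by lra.
  exists (mkposreal _ Hp). intros y Hy Hyb. apply ballR1 in Hy. simpl in Hy. apply ballR2.
  assert (x1 < y) by (unfold Rabs in Hy; destruct Rcase_abs; lra).
  assert (w y <= w x1) by (apply Hdec; lra).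
  assert (- w y <= m) by (apply Hub; exists y; split; auto; lra).
  unfold Rabs; destruct Rcase_abs; lra.
Qed.

Lemma sqrt_sq1_le y : 1 <= y -> 0 <= sqrt (y ^ 2 - 1) <= y.
Proof.
  intros Hy. split. apply sqrt_pos.
  rewrite <- (sqrt_pow2 y) at 2 by lra. apply sqrt_le_1_alt. lra.
Qed.

Lemma sqrt_sq1_lip lo hi a b : 1 < lo -> lo <= a <= hi -> lo <= b <= hi ->
  Rabs (sqrt (a ^ 2 - 1) - sqrt (b ^ 2 - 1)) <= hi / sqrt (lo ^ 2 - 1) * Rabs (a - b).
Proof.
  intros Hlo Ha Hb.
  set (s := sqrt (lo ^ 2 - 1)). set (p := sqrt (a ^ 2 - 1)). set (q := sqrt (b ^ 2 - 1)).
  assert (Hs : 0 < s) by (apply sqrt_lt_R0; nra).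
  assert (Hps : s <= p) by (apply sqrt_le_1_alt; nra).
  assert (Hqs : s <= q) by (apply sqrt_le_1_alt; nra).
  assert (Hp2 : p * p = a ^ 2 - 1) by (apply sqrt_sqrt; nra).
  assert (Hq2 : q * q = b ^ 2 - 1) by (apply sqrt_sqrt; nra).
  assert (E : (p - q) * (p + q) = (a - b) * (a + b)) by nra.
  assert (E2 : Rabs (p - q) * (p + q) = Rabs (a - b) * (a + b)).
  { rewrite <- (Rabs_right (p + q)) by lra. rewrite <- (Rabs_right (a + b)) by lra.
    rewrite <- !Rabs_mult. rewrite E. auto. }
  apply Rmult_le_reg_r with s. auto.
  unfold Rdiv. replace (hi * / s * Rabs (a - b) * s) with (hi * Rabs (a - b)) by (field; lra).
  pose proof (Rabs_pos (p - q)). pose proof (Rabs_pos (a - b)).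
  assert (Rabs (p - q) * (2 * s) <= Rabs (a - b) * (2 * hi)).
  { apply Rle_trans with (Rabs (p - q) * (p + q)). apply Rmult_le_compat_l; lra.
    rewrite E2. apply Rmult_le_compat_l; lra. }
  lra.
Qed.

Lemma is_derive_eq (f : R -> R) x (l1 l2 : R) : is_derive f x l1 -> l1 = l2 -> is_derive f x l2.
Proof. intros H ->; auto. Qed.

Lemma clamp_lip (lo hi x y : R) : lo <= hi -> Rabs (Rmax lo (Rmin hi x) - Rmax lo (Rmin hi y)) <= Rabs (x - y).
Proof. intros. unfold Rmax, Rmin. repeat destruct Rle_dec; unfold Rabs; repeat destruct Rcase_abs; lra. Qed.

Lemma clamp_in (lo hi x : R) : lo <= hi -> lo <= Rmax lo (Rmin hi x) <= hi.
Proof. intros. unfold Rmax, Rmin. repeat destruct Rle_dec; lra. Qed.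

Lemma clamp_id (lo hi x : R) : lo <= x <= hi -> Rmax lo (Rmin hi x) = x.
Proof. intros. unfold Rmax, Rmin. repeat destruct Rle_dec; lra. Qed.

Lemma clamp_cont (lo hi x : R) : lo <= hi -> continuous (fun y => Rmax lo (Rmin hi y)) x.
Proof. intros. apply lip_cont with 1. lra. intros. rewrite Rmult_1_l. apply clamp_lip; auto. Qed.

Lemma ratio_bound (N y a e : R) : y < a -> Rabs N <= e * (a - y) -> Rabs (N / (y - a)) <= e.
Proof.
  intros Hy HN. rewrite Rabs_div by lra. rewrite (Rabs_left (y - a)) by lra.
  apply Rmult_le_reg_r with (- (y - a)). lra. unfold Rdiv. rewrite Rmult_assoc, Rinv_l by lra.
  replace (- (y - a)) with (a - y) by ring. lra.
Qed.

Section Main.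
Variable v : R -> R.
Variable phi0 : R.
Hypothesis Hs : smooth v.
Hypothesis Hpos : forall phi, phi0 <= phi -> 0 < v phi /\ 0 < Derive v phi.

Let k := frakv v.

Lemma Hv1 x : ex_derive v x.
Proof. exact (Hs 1%nat x). Qed.
Lemma Hv2 x : ex_derive (Derive v) x.
Proof. exact (Hs 2%nat x). Qed.

Lemma kpos x : phi0 <= x -> 0 < k x.
Proof.
  intros Hx. destruct (Hpos x Hx). unfold k. rewrite frakv_eq; [|apply Hv1|auto].
  apply Rdiv_lt_0_compat; lra.
Qed.

Lemma kcont x : phi0 < x -> continuous k x.
Proof.
  intros Hx. apply continuous_ext_loc with (fun y => Derive v y * / (2 * v y)).
  - assert (Hp : 0 < x - phi0) by lra. exists (mkposreal _ Hp). intros y Hy. apply ballR1 in Hy. simpl in Hy.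
    unfold k. rewrite frakv_eq. reflexivity. apply Hv1. apply Hpos. unfold Rabs in Hy; destruct Rcase_abs; lra.
  - apply (continuous_mult (K:=R_AbsRing) (fun y => Derive v y) (fun y => / (2 * v y))).
    + apply (ex_derive_continuous (K:=R_AbsRing) (V:=R_NormedModule)). apply Hv2.
    + apply continuous_Rinv_comp.
      * apply (continuous_mult (K:=R_AbsRing) (fun _ => 2) v). apply continuous_const.
        apply (ex_derive_continuous (K:=R_AbsRing) (V:=R_NormedModule)). apply Hv1.
      * destruct (Hpos x); lra.
Qed.

Lemma sq1_cont (y : R) : continuous (fun y => sqrt (y ^ 2 - 1)) y.
Proof.
  apply continuous_sqrt_comp. apply (ex_derive_continuous (K:=R_AbsRing) (V:=R_NormedModule)). auto_derive. auto.
Qed.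


Theorem main_thm (h0 : R) (h : R -> R) (T : Rbar) :
  1 < h0 ->
  is_maximal_sol v phi0 h0 h T ->
  (exists phi1 : R,
     phi0 < phi1 /\ T = Finite phi1 /\
     filterlim h (at_left phi1) (locally 1) /\
     filterlim (fun phi => (h phi - 1) / (phi - phi1)) (at_left phi1)
               (locally (- frakv v phi1)) /\
     - frakv v phi1 < 0)
  \/ T = p_infty.
Proof.
  intros Hh0 [[HT [Hh0' [Hcont [Hgt1 Hder]]]] Hmax].
  destruct T as [Tf| |]; [| right; reflexivity | simpl in HT; contradiction].
  simpl in HT.
  assert (Hgt : forall x, phi0 <= x < Tf -> 1 < h x) by (intros x Hx; apply Hgt1; simpl; lra).
  assert (Hd : forall x, phi0 < x < Tf -> is_derive h x (sqrt (h x ^ 2 - 1) - k x * h x))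
    by (intros x Hx; apply Hder; simpl; lra).
  clear Hgt1 Hder.
  (* monotone quantity *)
  set (w := fun x => h x * exp (- x)).
  assert (He : forall t, is_derive (fun t => exp (- t)) t (- exp (- t))).
  { intros t. auto_derive; auto. ring. }
  assert (Hdw : forall t, phi0 < t < Tf -> is_derive w t ((sqrt (h t ^ 2 - 1) - k t * h t - h t) * exp (- t))).
  { intros t Ht. apply (is_derive_eq _ _ _ _ (is_derive_mult h (fun t => exp (- t)) t _ _ (Hd t Ht) (He t) Rmult_comm)).
    unfold plus, mult; simpl. ring. }
  assert (Hdec : forall x y, phi0 < x -> x <= y -> y < Tf -> w y <= w x).
  { intros x y Hx Hxy Hy. destruct (Req_dec x y) as [<-|Hne]; [lra|].
    destruct (MVT_gen w x y (fun t => (sqrt (h t ^ 2 - 1) - k t * h t - h t) * exp (- t))) as [xi [Hxi Heq]].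
    - intros t Ht. rewrite Rmin_left in Ht by lra. rewrite Rmax_right in Ht by lra. apply Hdw. lra.
    - intros t Ht. rewrite Rmin_left in Ht by lra. rewrite Rmax_right in Ht by lra. eapply der_cpt. apply Hdw. lra.
    - rewrite Rmin_left in Hxi by lra. rewrite Rmax_right in Hxi by lra.
      assert (Hxi' : phi0 < xi < Tf) by lra.
      pose proof (Hgt xi (conj (Rlt_le _ _ (proj1 Hxi')) (proj2 Hxi'))) as H1.
      pose proof (sqrt_sq1_le (h xi) (Rlt_le _ _ H1)) as H2.
      pose proof (kpos xi (Rlt_le _ _ (proj1 Hxi'))) as H3.
      pose proof (exp_pos (- xi)) as H4.
      assert (H5 : (sqrt (h xi ^ 2 - 1) - k xi * h xi - h xi) <= 0) by nra.
      assert (H6 : (sqrt (h xi ^ 2 - 1) - k xi * h xi - h xi) * exp (- xi) <= 0) by nra.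
      assert (H7 : (sqrt (h xi ^ 2 - 1) - k xi * h xi - h xi) * exp (- xi) * (y - x) <= 0) by nra.
      lra. }
  assert (Hwpos : forall x, phi0 < x < Tf -> 0 <= w x).
  { intros x Hx. unfold w. pose proof (Hgt x (conj (Rlt_le _ _ (proj1 Hx)) (proj2 Hx))). pose proof (exp_pos (- x)). nra. }
  destruct (dec_lim w phi0 Tf HT Hdec Hwpos) as [l0 Hl0].
  set (L := l0 * exp Tf).
  assert (HhL : filterlim h (at_left Tf) (locally L)).
  { apply filterlim_ext_loc with (fun x => w x * exp x).
    - apply filter_forall. intros x. unfold w. rewrite Rmult_assoc, <- exp_plus, Rplus_opp_l, exp_0. ring.
    - apply fl_mult; auto. apply cont_left. apply continuous_exp. }
  assert (Hev : at_left Tf (fun y => phi0 < y < Tf)).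
  { assert (Hp : 0 < Tf - phi0) by lra. exists (mkposreal _ Hp). intros y Hy Hyt. apply ballR1 in Hy. simpl in Hy.
    unfold Rabs in Hy; destruct Rcase_abs; lra. }
  assert (HL1 : 1 <= L).
  { assert (- L <= -1); [|lra].
    apply (lim_le_ev (fun x => - h x) Tf). apply fl_opp; auto.
    eapply filter_imp; [|exact Hev]. intros y Hy. simpl.
    pose proof (Hgt y (conj (Rlt_le _ _ (proj1 Hy)) (proj2 Hy))). lra. }
  set (l := sqrt (L ^ 2 - 1) - k Tf * L).
  assert (Hdl : filterlim (fun x => sqrt (h x ^ 2 - 1) - k x * h x) (at_left Tf) (locally l)).
  { apply fl_sub_mul; auto.
    - apply (fl_comp h (fun y => sqrt (y ^ 2 - 1))); auto. apply sq1_cont.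
    - apply cont_left. apply kcont. auto. }
  assert (Hslope : forall eps, 0 < eps -> exists eta, 0 < eta /\
    forall x, Tf - eta < x < Tf -> Rabs (h x - L - l * (x - Tf)) <= eps * (Tf - x)).
  { apply (slope_left h (fun x => sqrt (h x ^ 2 - 1) - k x * h x) Tf L l (Tf - phi0)); auto.
    lra. intros x Hx. apply Hd. lra. }
  destruct (Req_dec L 1) as [HL|HL].
  -
    left. exists Tf. split; [auto|]. split; [auto|]. split. { rewrite <- HL. auto. }
    assert (Hl : l = - k Tf).
    { unfold l. rewrite HL. replace (1 ^ 2 - 1) with 0 by ring. rewrite sqrt_0. ring. }
    split.
    + apply filterlim_locally. intros eps.
      destruct (Hslope (eps / 2)) as [eta [Heta Hb]]. { pose proof (cond_pos eps); lra. }
      exists (mkposreal _ Heta). intros y Hy Hyt. apply ballR1 in Hy. simpl in Hy. apply ballR2.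
      change (frakv v Tf) with (k Tf). rewrite <- Hl.
      replace ((h y - 1) / (y - Tf) - l) with ((h y - L - l * (y - Tf)) / (y - Tf)) by (rewrite HL; field; lra).
      eapply Rle_lt_trans. apply ratio_bound; auto. apply Hb. unfold Rabs in Hy; destruct Rcase_abs; lra.
      pose proof (cond_pos eps); lra.
    + pose proof (kpos Tf). change (frakv v Tf) with (k Tf). lra.
  - (* extension contradicts maximality *)
    exfalso. assert (HL' : 1 < L) by lra.
    set (r := (L - 1) / 2). assert (Hr : 0 < r) by (unfold r; lra).
    assert (Hrdef : L = 1 + 2 * r) by (unfold r; field).
    set (lo := 1 + r). set (hi := L + r).
    assert (Hlohi : 1 < lo <= hi) by (unfold lo, hi, r; lra).
    set (al := (phi0 + Tf) / 2). set (be := Tf + 1).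
    assert (Halbe : phi0 < al < Tf /\ Tf < be) by (unfold al, be; lra).
    set (clI := fun x => Rmax al (Rmin be x)).
    set (kc := fun x => k (clI x)).
    assert (HclI : forall x, al <= clI x <= be) by (intros; apply clamp_in; lra).
    assert (Hkc : forall x, continuous kc x).
    { intros x. unfold kc. apply (continuous_comp clI k). apply clamp_cont; lra.
      apply kcont. pose proof (HclI x). lra. }
    destruct (continuity_ab_maj (fun x => Rabs (kc x)) al be) as [Mx [HMx _]]. lra.
    { intros c0 _. apply continuity_pt_filterlim. apply (continuous_Rabs_comp kc). apply Hkc. }
    set (K1 := Rabs (kc Mx)).
    assert (HK1 : forall x, Rabs (kc x) <= K1).
    { intros x. unfold K1. replace (kc x) with (kc (clI x)). apply HMx. apply HclI.
      unfold kc. f_equal. unfold clI at 1. apply clamp_id. apply HclI. }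
    assert (HK10 : 0 <= K1) by apply Rabs_pos.
    set (cl := fun y => Rmax lo (Rmin hi y)).
    assert (Hcl : forall y, lo <= cl y <= hi) by (intros; apply clamp_in; lra).
    set (sq := sqrt (lo ^ 2 - 1)).
    assert (Hsq : 0 < sq) by (apply sqrt_lt_R0; nra).
    set (Fc := fun x y => sqrt (cl y ^ 2 - 1) - kc x * cl y).
    set (M := hi * (1 + K1)). set (K := hi / sq + K1).
    assert (HK0 : 0 <= K). { unfold K. assert (0 <= hi / sq) by (apply Rlt_le, Rdiv_lt_0_compat; lra). lra. }
    assert (HM0 : 0 <= M) by (unfold M; nra).
    assert (HFc : forall phi : R -> R, (forall t, continuous phi t) -> forall t, continuous (fun t => Fc t (phi t)) t).
    { intros phi Hphi t. unfold Fc.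
      assert (Hc : continuous (fun t => cl (phi t)) t).
      { apply (continuous_comp phi cl). auto. apply clamp_cont; lra. }
      apply (fl_sub_mul (F := locally t) (fun t => sqrt (cl (phi t) ^ 2 - 1)) kc (fun t => cl (phi t))); auto.
      apply (fl_comp (fun t => cl (phi t)) (fun y => sqrt (y ^ 2 - 1))); auto. apply sq1_cont. apply Hkc. }
    assert (HM : forall x y, Rabs (Fc x y) <= M).
    { intros x y. unfold Fc, M. pose proof (Hcl y). pose proof (sqrt_sq1_le (cl y)) as Hs1.
      pose proof (HK1 x).
      eapply Rle_trans. apply Rabs_triang. rewrite Rabs_Ropp, Rabs_mult, (Rabs_right (cl y)) by lra.
      rewrite Rabs_right by (apply Rle_ge, Hs1; lra).
      assert (Rabs (kc x) * cl y <= K1 * hi) by (apply Rmult_le_compat; try lra; apply Rabs_pos).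
      specialize (Hs1 ltac:(lra)). nra. }
    assert (HK : forall x y1 y2, Rabs (Fc x y1 - Fc x y2) <= K * Rabs (y1 - y2)).
    { intros x y1 y2. unfold Fc, K.
      replace (sqrt (cl y1 ^ 2 - 1) - kc x * cl y1 - (sqrt (cl y2 ^ 2 - 1) - kc x * cl y2))
        with ((sqrt (cl y1 ^ 2 - 1) - sqrt (cl y2 ^ 2 - 1)) + - (kc x * (cl y1 - cl y2))) by ring.
      eapply Rle_trans. apply Rabs_triang. rewrite Rabs_Ropp, Rabs_mult.
      pose proof (sqrt_sq1_lip lo hi (cl y1) (cl y2) (proj1 Hlohi) (Hcl y1) (Hcl y2)) as H1.
      fold sq in H1.
      pose proof (clamp_lip lo hi y1 y2 ltac:(lra)) as H2. fold (cl y1) (cl y2) in H2.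
      assert (H3 : 0 <= hi / sq) by (apply Rlt_le, Rdiv_lt_0_compat; lra).
      assert (H4 : hi / sq * Rabs (cl y1 - cl y2) <= hi / sq * Rabs (y1 - y2)) by (apply Rmult_le_compat_l; auto).
      assert (H5 : Rabs (kc x) * Rabs (cl y1 - cl y2) <= K1 * Rabs (y1 - y2))
        by (apply Rmult_le_compat; auto; apply Rabs_pos).
      lra. }
    set (d := Rmin (Rmin (/ (2 * K + 2)) (r / (M + 1))) (Rmin (Tf - al) 1)).
    assert (Hd1 : d <= / (2 * K + 2)) by (unfold d; pose proof (Rmin_l (Rmin (/ (2 * K + 2)) (r / (M + 1))) (Rmin (Tf - al) 1)); pose proof (Rmin_l (/ (2 * K + 2)) (r / (M + 1))); lra).
    assert (Hd2 : d <= r / (M + 1)) by (unfold d; pose proof (Rmin_l (Rmin (/ (2 * K + 2)) (r / (M + 1))) (Rmin (Tf - al) 1)); pose proof (Rmin_r (/ (2 * K + 2)) (r / (M + 1))); lra).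
    assert (Hd3 : d <= Tf - al) by (unfold d; pose proof (Rmin_r (Rmin (/ (2 * K + 2)) (r / (M + 1))) (Rmin (Tf - al) 1)); pose proof (Rmin_l (Tf - al) 1); lra).
    assert (Hd4 : d <= 1) by (unfold d; pose proof (Rmin_r (Rmin (/ (2 * K + 2)) (r / (M + 1))) (Rmin (Tf - al) 1)); pose proof (Rmin_r (Tf - al) 1); lra).
    assert (Hd0 : 0 < d).
    { unfold d. apply Rmin_pos; apply Rmin_pos; try lra. apply Rinv_0_lt_compat; lra. apply Rdiv_lt_0_compat; lra. }
    assert (HKd : K * d <= / 2).
    { apply Rle_trans with (K * / (2 * K + 2)). apply Rmult_le_compat_l; auto.
      assert (E : K * / (2 * K + 2) = / 2 - / (2 * K + 2)) by (field; lra).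
      assert (0 < / (2 * K + 2)) by (apply Rinv_0_lt_compat; lra). lra. }
    assert (HMd : M * d <= r).
    { apply Rle_trans with (M * (r / (M + 1))). apply Rmult_le_compat_l; auto.
      assert (E : M * (r / (M + 1)) = r - r / (M + 1)) by (field; lra).
      assert (0 < r / (M + 1)) by (apply Rdiv_lt_0_compat; lra). lra. }
    destruct (picard Fc Tf L M K d HFc HM HK HK0 Hd0 HKd) as [g [Hg0 [Hgd Hgb]]].
    assert (Hin : forall x, Rabs (x - Tf) <= d -> lo <= g x <= hi).
    { intros x Hx. pose proof (Hgb x Hx) as Hb.
      assert (M * Rabs (x - Tf) <= M * d) by (apply Rmult_le_compat_l; auto).
      assert (Hb2 : Rabs (g x - L) <= r) by lra.
      unfold lo, hi. unfold Rabs in Hb2; destruct Rcase_abs in Hb2; lra. }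
    assert (HI : forall x, Rabs (x - Tf) <= d -> clI x = x).
    { intros x Hx. unfold clI. apply clamp_id. assert (Hbe : be = Tf + 1) by reflexivity.
      unfold Rabs in Hx; destruct Rcase_abs in Hx; lra. }
    assert (HFeq : forall x, Rabs (x - Tf) <= d -> Fc x (g x) = sqrt (g x ^ 2 - 1) - k x * g x).
    { intros x Hx. unfold Fc, kc. rewrite HI by auto. unfold cl. rewrite clamp_id by (apply Hin; auto). reflexivity. }
    set (G := fun x => if Rlt_dec x Tf then h x else g x).
    assert (HGl : forall x, x < Tf -> G x = h x) by (intros x Hx; unfold G; destruct Rlt_dec; [auto|lra]).
    assert (HGr : forall x, Tf <= x -> G x = g x) by (intros x Hx; unfold G; destruct Rlt_dec; [lra|auto]).
    apply (Hmax (Finite (Tf + d / 2)) G).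
    + simpl. lra.
    + intros x Hx Hxt. simpl in Hxt. apply HGl. auto.
    + split; [simpl; lra|]. split; [rewrite HGl; auto; lra|]. split.
      { apply filterlim_ext_loc with h; auto.
        assert (Hp : 0 < Tf - phi0) by lra. exists (mkposreal _ Hp). intros y Hy Hyp. apply ballR1 in Hy. simpl in Hy.
        symmetry. apply HGl. unfold Rabs in Hy; destruct Rcase_abs in Hy; lra. }
      split.
      { intros x Hx Hxt. simpl in Hxt. destruct (Rlt_dec x Tf) as [Hl|Hl].
        - rewrite HGl by auto. apply Hgt; lra.
        - rewrite HGr by lra. assert (Rabs (x - Tf) <= d) by (rewrite Rabs_right; lra).
          pose proof (Hin x H). lra. }
      intros x Hx Hxt. simpl in Hxt. destruct (Rtotal_order x Tf) as [Hlt|[Heq|Hgt']].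
      * rewrite HGl by auto. apply is_derive_ext_loc with h; [|apply Hd; lra].
        assert (Hp : 0 < Tf - x) by lra. exists (mkposreal _ Hp). intros y Hy. apply ballR1 in Hy. simpl in Hy.
        symmetry. apply HGl. unfold Rabs in Hy; destruct Rcase_abs in Hy; lra.
      * subst x. rewrite HGr by lra. rewrite Hg0. fold l.
        apply (glue h g G Tf L l).
        -- rewrite HGr by lra. auto.
        -- auto.
        -- intros; apply HGr; lra.
        -- auto.
        -- assert (Habs : Rabs (Tf - Tf) < d) by (rewrite Rminus_diag, Rabs_R0; lra).
           pose proof (Hgd Tf Habs) as H. rewrite HFeq in H by lra. rewrite Hg0 in H. exact H.
        -- auto.
      * assert (Habs : Rabs (x - Tf) < d) by (rewrite Rabs_right; lra).
        rewrite HGr by lra. apply is_derive_ext_loc with g.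
        { assert (Hp : 0 < x - Tf) by lra. exists (mkposreal _ Hp). intros y Hy. apply ballR1 in Hy. simpl in Hy.
          symmetry. apply HGr. unfold Rabs in Hy; destruct Rcase_abs in Hy; lra. }
        rewrite <- HFeq by lra. apply Hgd. auto.
Qed.

End Main.

Theorem proposition3 (v : R -> R) (phi0 h0 : R) (h : R -> R) (T : Rbar) :
  smooth v ->
  (forall phi, phi0 <= phi -> 0 < v phi /\ 0 < Derive v phi) ->
  1 < h0 ->
  is_maximal_sol v phi0 h0 h T ->
  (* type A: reaches the boundary h = 1 at a finite phi1 > phi0 with slope -frakv *)
  (exists phi1 : R,
     phi0 < phi1 /\ T = Finite phi1 /\
     filterlim h (at_left phi1) (locally 1) /\
     filterlim (fun phi => (h phi - 1) / (phi - phi1)) (at_left phi1)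
               (locally (- frakv v phi1)) /\
     - frakv v phi1 < 0)
  \/
  (* type B: exists and stays in R_0 for all phi > phi0 *)
  T = p_infty.
Proof.
  intros Hs Hpos Hh0 Hm. exact (main_thm v phi0 Hs Hpos h0 h T Hh0 Hm).
Qed.
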